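(* Let $\mathbf{L}$ be the least monotonic predicate modal logic (respectively the least monotonic topped, the least monotonic cufi, the least monotonic topped cufi predicate modal logic). Then for every formula $\varphi$: $\varphi\in\mathbf{L}$ if and only if $Z\models\varphi$ for every monotonic (respectively monotonic topped, monotonic cufi, monotonic topped cufi) neighborhood frame $Z$. In particular, the least normal predicate modal logic $\mathbf{QK}$ is sound and complete with respect to the class of monotonic, topped, cufi neighborhood frames with constant domains.
   Context: Language: countable set $\mathsf{V}$ of variables, $\top,\bot$, $\land,\neg$, $\forall$, countably many $n$-ary predicate symbols for each $n\in\mathbb{N}$, and $\Box$. A predicate modal logic is a set $\mathbf{L}$ of formulas containing all theorems of classical predicate logic, closed under substitution, modus ponens, generalization, and the rule $\varphi\equiv\psi\in\mathbf{L}\Rightarrow\Box\varphi\equiv\Box\psi\in\mathbf{L}$. It is monotonic if it contains $\Box(p\land q)\supset\Box p\land\Box q$, topped if it contains $\Box\top$, cufi if it contains $\Box p\land\Box q\supset\Box(p\land q)$ ($p,q$ 0-ary predicate symbols); normal means monotonic, topped and cufi. A neighborhood frame is $\langle C,\mathcal{V}\rangle$ with $C\ne\emptyset$, $\mathcal{V}:C\to\mathcal{P}(\mathcal{P}(C))$; it is monotonic if each $\mathcal{V}(c)$ is upward closed under $\subseteq$, topped if $C\in\mathcal{V}(c)$ for all $c$, cufi if each $\mathcal{V}(c)$ is closed under non-empty finite intersections. A neighborhood model on $\langle C,\mathcal{V}\rangle$ adds a single non-empty domain $\mathcal{D}$ and an interpretation $\mathcal{I}(c,P)\subseteq\mathcal{D}^n$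 for $n$-ary $P$; truth sets under assignments $\mathcal{A}:\mathsf{V}\to\mathcal{D}$ are defined classically with $\|\forall x\varphi\|_{\mathcal{A}}=\bigcap$ over $x$-variants of $\mathcal{A}$ and $c\in\|\Box\varphi\|_{\mathcal{A}}$ iff $\|\varphi\|_{\mathcal{A}}\in\mathcal{V}(c)$. $\mathcal{M}\models\varphi$ means $\|\varphi\|_{\mathcal{A}}=C$ for all $\mathcal{A}$; $Z\models\varphi$ means $\mathcal{M}\models\varphi$ for every model $\mathcal{M}$ on $Z$ (every domain and interpretation). *)

(* Defs.v *)
From Stdlib Require Import List Arith.
Import ListNotations.

(* An atomic formula [FAtom k args] is the
   application of the predicate symbol P^n_k (the k-th predicate symbol of
   arity n) to the variables [args], where n = length args.  So there are
   countably many n-ary predicate symbols for every n. *)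
Inductive form : Type :=
| FTop : form
| FBot : form
| FAtom (k : nat) (args : list nat) : form
| FAnd (p q : form) : form
| FNeg (p : form) : form
| FAll (x : nat) (p : form) : form
| FBox (p : form) : form.

Definition Imp (p q : form) : form := FNeg (FAnd p (FNeg q)).
Definition Equiv (p q : form) : form := FAnd (Imp p q) (Imp q p).

Definition upd {T : Type} (f : nat -> T) (x : nat) (t : T) : nat -> T :=
  fun v => if Nat.eqb v x then t else f v.

Fixpoint free (v : nat) (p : form) : Prop :=
  match p with
  | FTop | FBot => False
  | FAtom _ args => In v args
  | FAnd p q => free v p \/ free v q
  | FNeg p => free v p
  | FAll x p => v <> x /\ free v p
  | FBox p => free v p
  end.

(** Simultaneous substitution of variables for free variables (naive: it is
    only meaningful together with the side condition [vsafe]). *)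
Fixpoint vsubst (s : nat -> nat) (p : form) : form :=
  match p with
  | FTop => FTop
  | FBot => FBot
  | FAtom k args => FAtom k (map s args)
  | FAnd p q => FAnd (vsubst s p) (vsubst s q)
  | FNeg p => FNeg (vsubst s p)
  | FAll x p => FAll x (vsubst (upd s x x) p)
  | FBox p => FBox (vsubst s p)
  end.

(* No variable introduced by [s] gets captured by a quantifier of p. *)
Fixpoint vsafe (s : nat -> nat) (p : form) : Prop :=
  match p with
  | FTop | FBot | FAtom _ _ => True
  | FAnd p q => vsafe s p /\ vsafe s q
  | FNeg p => vsafe s p
  | FAll x q => vsafe (upd s x x) q /\ (forall v, v <> x -> free v q -> s v <> x)
  | FBox p => vsafe s p
  end.

Fixpoint inst (xs ys : list nat) (v : nat) : nat :=
  match xs, ys with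
  | x :: xs', y :: ys' => if Nat.eqb v x then y else inst xs' ys' v
  | _, _ => v
  end.

(** A (simultaneous) formula substitution [S] assigns to every predicate symbol
    P^n_k a pair (xs, C) : a list xs of n distinct variables and a formula C;
    it replaces every atom P^n_k(y_1..y_n) by C[y_1/x_1,...,y_n/x_n]. *)
Definition fsubst := nat -> nat -> (list nat * form).

Definition wf_fsubst (S : fsubst) : Prop :=
  forall n k, length (fst (S n k)) = n /\ NoDup (fst (S n k)).

Fixpoint psubst (S : fsubst) (p : form) : form :=
  match p with
  | FTop => FTop
  | FBot => FBot
  | FAtom k args =>
      vsubst (inst (fst (S (length args) k)) args) (snd (S (length args) k))
  | FAnd p q => FAnd (psubst S p) (psubst S q)
  | FNeg p => FNeg (psubst S p)
  | FAll x p => FAll x (psubst S p)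
  | FBox p => FBox (psubst S p)
  end.

(* Admissibility (no variable capture): [B] is the set of variables bound
   above the current position. *)
Fixpoint psafe (B : nat -> Prop) (S : fsubst) (p : form) : Prop :=
  match p with
  | FTop | FBot => True
  | FAtom k args =>
      vsafe (inst (fst (S (length args) k)) args) (snd (S (length args) k)) /\
      (forall v, free v (snd (S (length args) k)) ->
                 ~ In v (fst (S (length args) k)) -> ~ B v)
  | FAnd p q => psafe B S p /\ psafe B S q
  | FNeg p => psafe B S p
  | FAll x q => psafe (fun v => v = x \/ B v) S q
  | FBox p => psafe B S p
  end.

Fixpoint beval (val : form -> bool) (p : form) : bool :=
  match p with
  | FTop => true
  | FBot => false
  | FAnd p q => beval val p && beval val q
  | FNeg p => negb (beval val p)
  | _ => val p
  end.

Definition tautology (p : form) : Prop := forall val, beval val p = true.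

Inductive CPL : form -> Prop :=
| cpl_taut p : tautology p -> CPL p
| cpl_inst x y p :
    vsafe (upd (fun v => v) x y) p ->
    CPL (Imp (FAll x p) (vsubst (upd (fun v => v) x y) p))
| cpl_gen_ax x p q :
    ~ free x p -> CPL (Imp (FAll x (Imp p q)) (Imp p (FAll x q)))
| cpl_mp p q : CPL p -> CPL (Imp p q) -> CPL q
| cpl_gen x p : CPL p -> CPL (FAll x p).

Definition is_PML (L : form -> Prop) : Prop :=
  (forall p, CPL p -> L p) /\
  (forall (S : fsubst) p, wf_fsubst S -> psafe (fun _ => False) S p ->
       L p -> L (psubst S p)) /\
  (forall p q, L p -> L (Imp p q) -> L q) /\
  (forall x p, L p -> L (FAll x p)) /\
  (forall p q, L (Equiv p q) -> L (Equiv (FBox p) (FBox q))).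

Definition p0 : form := FAtom 0 [].
Definition q0 : form := FAtom 1 [].

Definition ax_mono : form := Imp (FBox (FAnd p0 q0)) (FAnd (FBox p0) (FBox q0)).
Definition ax_top : form := FBox FTop.
Definition ax_cufi : form := Imp (FAnd (FBox p0) (FBox q0)) (FBox (FAnd p0 q0)).

Definition LeastLogic (Ax : form -> Prop) (p : form) : Prop :=
  forall L, is_PML L -> (forall a, Ax a -> L a) -> L p.

Definition ax_set (t c : bool) (a : form) : Prop :=
  a = ax_mono \/ (t = true /\ a = ax_top) \/ (c = true /\ a = ax_cufi).

(* QK: least normal (= monotonic, topped, cufi) predicate modal logic *)
Definition QK (p : form) : Prop :=
  LeastLogic (fun a => a = ax_mono \/ a = ax_top \/ a = ax_cufi) p.

Section Semantics.
Context {C D : Type}.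

Fixpoint sat (V : C -> (C -> Prop) -> Prop) (I : C -> nat -> nat -> list D -> Prop)
  (A : nat -> D) (p : form) (c : C) : Prop :=
  match p with
  | FTop => True
  | FBot => False
  | FAtom k args => I c (length args) k (map A args)
  | FAnd p q => sat V I A p c /\ sat V I A q c
  | FNeg p => ~ sat V I A p c
  | FAll x p => forall d : D, sat V I (upd A x d) p c
  | FBox p => V c (fun c' => sat V I A p c')
  end.
End Semantics.

Definition monotonicN {C : Type} (V : C -> (C -> Prop) -> Prop) : Prop :=
  forall c (X Y : C -> Prop), V c X -> (forall w, X w -> Y w) -> V c Y.

Definition toppedN {C : Type} (V : C -> (C -> Prop) -> Prop) : Prop :=
  forall c, V c (fun _ => True).

Definition cufiN {C : Type} (V : C -> (C -> Prop) -> Prop) : Prop :=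
  forall c (l : list (C -> Prop)), l <> [] -> (forall X, In X l -> V c X) ->
    V c (fun w => forall X, In X l -> X w).

Definition fvalid {C : Type} (V : C -> (C -> Prop) -> Prop) (p : form) : Prop :=
  forall (D : Type), inhabited D ->
  forall (I : C -> nat -> nat -> list D -> Prop) (A : nat -> D) (c : C),
    sat V I A p c.

(* Main.v *)
Require Import Defs.
From Stdlib Require Import List Arith Lia Classical FunctionalExtensionality PropExtensionality IndefiniteDescription Cantor.
Import ListNotations.


Definition xm_inf (P : Prop) : {P} + {~ P}.
Proof.
  destruct (constructive_indefinite_description (fun b : bool => if b then P else ~ P)) as [[|] H].
  - destruct (classic P); [exists true|exists false]; auto.
  - left; auto.
  - right; auto.
Defined.

Lemma upd_eq {T} (f : nat -> T) x t : upd f x t x = t.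
Proof. unfold upd. now rewrite Nat.eqb_refl. Qed.
Lemma upd_neq {T} (f : nat -> T) x t v : v <> x -> upd f x t v = f v.
Proof. unfold upd. intros H. destruct (Nat.eqb_spec v x); congruence. Qed.

Fixpoint bnd (z : nat) (p : form) : Prop :=
  match p with
  | FTop | FBot | FAtom _ _ => False
  | FAnd p q => bnd z p \/ bnd z q
  | FNeg p => bnd z p
  | FAll x p => z = x \/ bnd z p
  | FBox p => bnd z p
  end.

Fixpoint vars (p : form) : list nat :=
  match p with
  | FTop | FBot => []
  | FAtom _ args => args
  | FAnd p q => vars p ++ vars q
  | FNeg p => vars p
  | FAll x p => x :: vars p
  | FBox p => vars p
  end.

Fixpoint fsb (v z : nat) (p : form) : Prop :=
  match p with
  | FTop | FBot | FAtom _ _ => False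
  | FAnd p q => fsb v z p \/ fsb v z q
  | FNeg p => fsb v z p
  | FAll x q => v <> x /\ ((z = x /\ free v q) \/ fsb v z q)
  | FBox p => fsb v z p
  end.

Lemma free_vars v p : free v p -> In v (vars p).
Proof. induction p; simpl; intuition; apply in_or_app; intuition. Qed.
Lemma bnd_vars v p : bnd v p -> In v (vars p).
Proof. induction p; simpl; intuition; apply in_or_app; intuition. Qed.

Lemma vsubst_ext p : forall s s', (forall v, free v p -> s v = s' v) -> vsubst s p = vsubst s' p.
Proof.
  induction p; intros s s' H; simpl in *; try reflexivity.
  - f_equal. apply map_ext_in. auto.
  - f_equal; auto.
  - f_equal; auto.
  - f_equal. apply IHp. intros v Hv. unfold upd. destruct (Nat.eqb_spec v x); auto.
  - f_equal; auto.
Qed.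

Lemma vsubst_id p : forall s, (forall v, free v p -> s v = v) -> vsubst s p = p.
Proof.
  induction p; intros s H; simpl in *; try reflexivity.
  - f_equal. rewrite <- (map_id args) at 2. apply map_ext_in. auto.
  - f_equal; auto.
  - f_equal; auto.
  - f_equal. apply IHp. intros v Hv. unfold upd. destruct (Nat.eqb_spec v x); auto.
  - f_equal; auto.
Qed.

Lemma vsubst_comp p : forall s1 s2, vsafe s1 p ->
  vsubst s2 (vsubst s1 p) = vsubst (fun v => s2 (s1 v)) p.
Proof.
  induction p; intros s1 s2 H; simpl in *; try reflexivity.
  - f_equal. apply map_map.
  - f_equal; intuition.
  - f_equal; auto.
  - destruct H as [H1 H2]. f_equal. rewrite IHp by auto. apply vsubst_ext.
    intros v Hv. unfold upd. destruct (Nat.eqb_spec v x).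
    + rewrite Nat.eqb_refl. auto.
    + destruct (Nat.eqb_spec (s1 v) x); auto. exfalso; eapply H2; eauto.
  - f_equal; auto.
Qed.

Lemma free_vsubst p : forall s v, free v (vsubst s p) -> exists u, free u p /\ s u = v.
Proof.
  induction p; intros s v H; simpl in *; try tauto.
  - apply in_map_iff in H. firstorder.
  - destruct H as [H|H]; [destruct (IHp1 _ _ H)|destruct (IHp2 _ _ H)]; firstorder.
  - auto.
  - destruct H as [Hn H]. destruct (IHp _ _ H) as [u [Hu Hs]].
    destruct (Nat.eqb_spec u x).
    + subst. rewrite upd_eq in Hn. congruence.
    + rewrite upd_neq in Hs by auto. exists u; auto.
  - auto.
Qed.

Lemma bnd_vsubst p : forall s z, bnd z (vsubst s p) <-> bnd z p.
Proof.
  induction p; intros s z; simpl in *; try tauto.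
  - rewrite IHp1, IHp2; tauto.
  - rewrite IHp; tauto.
  - rewrite IHp; tauto.
  - rewrite IHp; tauto.
Qed.

Lemma vsafe_bc p : forall s, (forall v, free v p -> bnd (s v) p -> s v = v) -> vsafe s p.
Proof.
  induction p; intros s H; simpl in *; try exact I.
  - split; [apply IHp1|apply IHp2]; intros v Hv Hb; apply H; auto.
  - apply IHp; auto.
  - split.
    + apply IHp. intros v Hv Hb. unfold upd in *. destruct (Nat.eqb_spec v x); auto.
    + intros v Hv Hf Heq. assert (s v = v) by (apply H; auto). congruence.
  - apply IHp; auto.
Qed.

Lemma fsb_neq p : forall v z, fsb v z p -> v <> z.
Proof. induction p; simpl; intros; intuition eauto; subst; auto. Qed.

Lemma fsb_free p : forall v z, fsb v z p -> free v p.
Proof. induction p; simpl; intros; intuition eauto. Qed.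

Lemma vsafe_fsb p : forall s, (forall v z, fsb v z p -> s v <> z) -> vsafe s p.
Proof.
  induction p; intros s H; simpl in *; try exact I.
  - split; [apply IHp1|apply IHp2]; intros v z Hv; apply H; auto.
  - apply IHp; auto.
  - split.
    + apply IHp. intros v z Hv. unfold upd. destruct (Nat.eqb_spec v x).
      * subst. apply (fsb_neq _ _ _ Hv).
      * apply H. auto.
    + intros v Hv Hf. apply H. auto.
  - apply IHp; auto.
Qed.

Lemma fsb_vsubst p : forall s v z, fsb v z (vsubst s p) -> exists u, fsb u z p /\ s u = v.
Proof.
  induction p; intros s v z H; simpl in *; try tauto.
  - destruct H as [H|H]; [destruct (IHp1 _ _ _ H)|destruct (IHp2 _ _ _ H)]; firstorder.
  - auto.
  - destruct H as [Hn [[Hz H]|H]].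
    + destruct (free_vsubst _ _ _ H) as [u [Hu Hs]].
      destruct (Nat.eqb_spec u x).
      * subst. rewrite upd_eq in Hn. congruence.
      * rewrite upd_neq in Hs by auto. exists u; auto.
    + destruct (IHp _ _ _ H) as [u [Hu Hs]].
      destruct (Nat.eqb_spec u x).
      * subst. rewrite upd_eq in Hn. congruence.
      * rewrite upd_neq in Hs by auto. exists u; auto.
  - eauto.
Qed.

Lemma rename_safe1 p x y : ~ In y (vars p) -> vsafe (upd (fun v => v) x y) p.
Proof.
  intros Hy. apply vsafe_bc. intros v Hv Hb. unfold upd in *.
  destruct (Nat.eqb_spec v x); auto. exfalso. apply Hy, bnd_vars; auto.
Qed.

Lemma rename_safe2 p x y : ~ In y (vars p) ->
  vsafe (upd (fun v => v) y x) (vsubst (upd (fun v => v) x y) p).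
Proof.
  intros Hy. apply vsafe_fsb. intros v z H.
  destruct (fsb_vsubst _ _ _ _ H) as [u [Hu Hs]].
  pose proof (fsb_neq _ _ _ H) as Hvz.
  unfold upd in *. destruct (Nat.eqb_spec v y); auto.
  subst v. destruct (Nat.eqb_spec u x).
  - subst. apply (fsb_neq _ _ _ Hu).
  - subst. exfalso. apply Hy. apply free_vars. eapply fsb_free; eauto.
Qed.

Lemma rename_back p x y : ~ In y (vars p) ->
  vsubst (upd (fun v => v) y x) (vsubst (upd (fun v => v) x y) p) = p.
Proof.
  intros Hy. rewrite vsubst_comp by (apply rename_safe1; auto).
  apply vsubst_id. intros v Hv. unfold upd.
  destruct (Nat.eqb_spec v x).
  - rewrite Nat.eqb_refl. auto.
  - destruct (Nat.eqb_spec v y); auto. subst. exfalso. apply Hy, free_vars; auto.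
Qed.

Lemma rename_notfree p x y : x <> y -> ~ free x (vsubst (upd (fun v => v) x y) p).
Proof.
  intros Hxy H. destruct (free_vsubst _ _ _ H) as [u [Hu Hs]].
  unfold upd in Hs. destruct (Nat.eqb_spec u x); congruence.
Qed.


Section S.
Context {C D : Type} (V : C -> (C -> Prop) -> Prop).

Lemma sat_ext p : forall (I : C -> nat -> nat -> list D -> Prop) A A',
  (forall v, free v p -> A v = A' v) -> forall c, sat V I A p c <-> sat V I A' p c.
Proof.
  induction p; intros I A A' H c; simpl in *; try tauto.
  - rewrite (map_ext_in A A' args); [tauto|auto].
  - rewrite (IHp1 I A A'), (IHp2 I A A'); auto; tauto.
  - rewrite (IHp I A A'); auto; tauto.
  - split; intros Hs d; eapply (IHp I); try apply Hs; intros v Hv; unfold upd;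
      destruct (Nat.eqb_spec v x); auto; symmetry; auto.
  - assert (E : (fun c' => sat V I A p c') = (fun c' => sat V I A' p c')).
    { apply functional_extensionality; intro c'. apply propositional_extensionality. auto. }
    rewrite E. tauto.
Qed.

Lemma sat_vsubst p : forall s (I : C -> nat -> nat -> list D -> Prop) A, vsafe s p ->
  forall c, sat V I A (vsubst s p) c <-> sat V I (fun v => A (s v)) p c.
Proof.
  induction p; intros s I A Hs c; simpl in *; try tauto.
  - rewrite map_length, map_map. tauto.
  - rewrite IHp1, IHp2 by tauto. tauto.
  - rewrite IHp by tauto. tauto.
  - destruct Hs as [Hs1 Hs2]. split; intros H d.
    + specialize (H d). rewrite IHp in H by auto.
      eapply sat_ext; [|apply H]. intros v Hv. unfold upd.
      destruct (Nat.eqb_spec v x). { subst. rewrite Nat.eqb_refl. auto. }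
      destruct (Nat.eqb_spec (s v) x); auto. exfalso; eapply Hs2; eauto.
    + rewrite IHp by auto. eapply sat_ext; [|apply (H d)]. intros v Hv. unfold upd.
      destruct (Nat.eqb_spec v x). { subst. rewrite Nat.eqb_refl. auto. }
      destruct (Nat.eqb_spec (s v) x); auto. exfalso; eapply Hs2; eauto.
  - assert (E : (fun c' => sat V I A (vsubst s p) c') = (fun c' => sat V I (fun v => A (s v)) p c')).
    { apply functional_extensionality; intro c'. apply propositional_extensionality. auto. }
    rewrite E. tauto.
Qed.

Fixpoint assign (xs : list nat) (ds : list D) (A : nat -> D) : nat -> D :=
  match xs, ds with
  | x :: xs', d :: ds' => upd (assign xs' ds' A) x d
  | _, _ => A
  end.

Lemma assign_inst xs : forall args (A A0 : nat -> D) v, length xs = length args ->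
  (In v xs -> A (inst xs args v) = assign xs (map A args) A0 v) /\
  (~ In v xs -> inst xs args v = v /\ assign xs (map A args) A0 v = A0 v).
Proof.
  induction xs as [|x xs IH]; intros args A A0 v Hl; simpl.
  - tauto.
  - destruct args as [|a args]; simpl in Hl; [discriminate|]. simpl.
    unfold upd. destruct (Nat.eqb_spec v x).
    + split; auto. intros H; exfalso; auto.
    + destruct (IH args A A0 v) as [H1 H2]; [lia|]. split.
      * intros [H|H]; [congruence|auto].
      * intros H. apply H2. tauto.
Qed.

Definition Ip (S : fsubst) (I : C -> nat -> nat -> list D -> Prop) (A0 : nat -> D)
  : C -> nat -> nat -> list D -> Prop :=
  fun c n k ds => sat V I (assign (fst (S n k)) ds A0) (snd (S n k)) c.

Lemma sat_psubst S (HS : wf_fsubst S) p : forall (B : nat -> Prop) I A A0,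
  psafe B S p -> (forall v, ~ B v -> A v = A0 v) ->
  forall c, sat V I A (psubst S p) c <-> sat V (Ip S I A0) A p c.
Proof.
  induction p; intros B I A A0 Hp HA c; simpl in *; try tauto.
  - destruct Hp as [Hs Hf]. rewrite sat_vsubst by auto. unfold Ip.
    apply sat_ext. intros v Hv.
    destruct (HS (length args) k) as [Hl _].
    destruct (classic (In v (fst (S (length args) k)))) as [Hi|Hi].
    + apply (assign_inst _ args A A0 v Hl). auto.
    + destruct (assign_inst _ args A A0 v Hl) as [_ H2]. destruct (H2 Hi) as [-> ->].
      apply HA. eapply Hf; eauto.
  - rewrite (IHp1 B I A A0), (IHp2 B I A A0) by tauto. tauto.
  - rewrite (IHp B I A A0) by tauto. tauto.
  - split; intros H d.
    + rewrite <- (IHp (fun v => v = x \/ B v) I (upd A x d) A0); auto.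
      intros v Hv. unfold upd. destruct (Nat.eqb_spec v x); [tauto|]. apply HA. tauto.
    + rewrite (IHp (fun v => v = x \/ B v) I (upd A x d) A0); auto.
      intros v Hv. unfold upd. destruct (Nat.eqb_spec v x); [tauto|]. apply HA. tauto.
  - assert (E : (fun c' => sat V I A (psubst S p) c') = (fun c' => sat V (Ip S I A0) A p c')).
    { apply functional_extensionality; intro c'. apply propositional_extensionality.
      apply (IHp B); auto. }
    rewrite E. tauto.
Qed.

Definition bval (I : C -> nat -> nat -> list D -> Prop) A c : form -> bool :=
  fun q => if xm_inf (sat V I A q c) then true else false.

Lemma beval_sat I A c p : beval (bval I A c) p = true <-> sat V I A p c.
Proof.
  induction p; try (simpl; unfold bval; destruct xm_inf as [h|h];
     simpl in h; split; intros; (discriminate || tauto)).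
  - simpl; split; auto.
  - simpl; split; [discriminate|tauto].
  - simpl. rewrite Bool.andb_true_iff. tauto.
  - simpl. rewrite Bool.negb_true_iff, <- Bool.not_true_iff_false. tauto.
  - simpl; unfold bval; destruct xm_inf as [h|h]; split; intros; auto.
    all: try discriminate. all: exfalso; apply h; simpl; auto.
Qed.

End S.

Definition Valid (t c : bool) (p : form) : Prop :=
  forall (W : Type), inhabited W ->
  forall V : W -> (W -> Prop) -> Prop,
    monotonicN V -> (t = true -> toppedN V) -> (c = true -> cufiN V) -> fvalid V p.

Lemma sat_imp {W Dt : Type} (V : W -> (W -> Prop) -> Prop) (I : W -> nat -> nat -> list Dt -> Prop) A a b w :
  sat V I A (Imp a b) w <-> (sat V I A a w -> sat V I A b w).
Proof. unfold Imp; simpl. split; intros H; [intros Ha; apply NNPP; tauto | tauto]. Qed.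

Lemma sat_equiv {W Dt : Type} (V : W -> (W -> Prop) -> Prop) (I : W -> nat -> nat -> list Dt -> Prop) A a b w :
  sat V I A (Equiv a b) w <-> (sat V I A a w <-> sat V I A b w).
Proof. unfold Equiv. change (sat V I A (FAnd (Imp a b) (Imp b a)) w) with (sat V I A (Imp a b) w /\ sat V I A (Imp b a) w). rewrite !sat_imp. tauto. Qed.

Lemma CPL_sound {W : Type} (V : W -> (W -> Prop) -> Prop) p : CPL p -> fvalid V p.
Proof.
  induction 1; intros Dt HD I A w.
  - apply (beval_sat V I A w). apply H.
  - rewrite sat_imp. simpl. intros H1. rewrite sat_vsubst by auto.
    eapply sat_ext; [|apply (H1 (A y))]. intros v Hv. unfold upd.
    destruct (Nat.eqb_spec v x); auto.
  - rewrite !sat_imp. intros H1 Hp. simpl. intros d.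
    apply (proj1 (sat_imp V I (upd A x d) p q w) (H1 d)). eapply sat_ext; [|apply Hp]. intros v Hv. unfold upd.
    destruct (Nat.eqb_spec v x); subst; tauto.
  - pose proof (IHCPL2 Dt HD I A w) as H2. rewrite sat_imp in H2. apply H2, IHCPL1; auto.
  - simpl. intros d. apply IHCPL; auto.
Qed.

Lemma Valid_PML t c : is_PML (Valid t c).
Proof.
  split; [|split; [|split; [|split]]].
  - intros p Hp W HW V _ _ _. apply CPL_sound; auto.
  - intros S a HS Hps Hp W HW V Hm Ht Hc Dt HD I A w.
    rewrite (sat_psubst V S HS a (fun _ => False) I A A) by auto.
    apply Hp; auto.
  - intros a b Hp Hq W HW V Hm Ht Hc Dt HD I A w.
    pose proof (Hq W HW V Hm Ht Hc Dt HD I A w) as H2. rewrite sat_imp in H2. apply H2, Hp; auto.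
  - intros x a Hp W HW V Hm Ht Hc Dt HD I A w. simpl. intros d. apply Hp; auto.
  - intros a b Hp W HW V Hm Ht Hc Dt HD I A w. rewrite sat_equiv. simpl.
    assert (E : (fun c0 => sat V I A a c0) = (fun c0 => sat V I A b c0)).
    { apply functional_extensionality; intro c'. apply propositional_extensionality.
      rewrite <- sat_equiv. apply Hp; auto. }
    rewrite E. tauto.
Qed.

Lemma Valid_ax t c a : ax_set t c a -> Valid t c a.
Proof.
  intros [->|[[-> ->]|[-> ->]]]; intros W HW V Hm Ht Hc Dt HD I A w.
  - unfold ax_mono. rewrite sat_imp. simpl. intros H; split; eapply Hm; eauto; simpl; tauto.
  - simpl. apply Ht; auto.
  - unfold ax_cufi. rewrite sat_imp. simpl. intros [H1 H2].
    pose proof (Hc eq_refl w [fun c' => I c' 0 0 []; fun c' => I c' 0 1 []]) as H.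
    eapply Hm; [apply H|].
    + discriminate.
    + simpl. intros X [<-|[<-|[]]]; auto.
    + simpl. intros w' Hw. split; apply Hw; auto.
Qed.

Lemma LL_sound t c p : LeastLogic (ax_set t c) p -> Valid t c p.
Proof. intros H. apply H. apply Valid_PML. apply Valid_ax. Qed.


Ltac taut := let val := fresh "val" in intro val; unfold Equiv, Imp; cbn [beval];
  repeat match goal with |- context [beval val ?x] => destruct (beval val x) | |- context [val ?x] => destruct (val x) end; reflexivity.

Section Der.
Variable L : form -> Prop.
Hypothesis HL : is_PML L.

Lemma Lcpl p : CPL p -> L p. Proof. apply HL. Qed.
Lemma Ltaut p : tautology p -> L p. Proof. intros; apply Lcpl, cpl_taut; auto. Qed.
Lemma Lmp p q : L p -> L (Imp p q) -> L q. Proof. apply HL. Qed.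
Lemma Lgen x p : L p -> L (FAll x p). Proof. apply HL. Qed.
Lemma Ltmp1 a b : tautology (Imp a b) -> L a -> L b.
Proof. intros T Ha. eapply Lmp; [apply Ha|apply Ltaut, T]. Qed.
Lemma Ltmp2 a b c : tautology (Imp a (Imp b c)) -> L a -> L b -> L c.
Proof. intros T Ha Hb. eapply Lmp; [apply Hb|]. eapply Lmp; [apply Ha|apply Ltaut, T]. Qed.

Definition S2 (a b : form) : fsubst := fun n k =>
  match n with
  | 0 => match k with 0 => ([], a) | 1 => ([], b) | _ => ([], FTop) end
  | _ => (seq 0 n, FTop)
  end.

Lemma S2_wf a b : wf_fsubst (S2 a b).
Proof.
  intros n k. destruct n; simpl.
  - destruct k as [|[|k]]; simpl; split; auto; constructor.
  - split; [apply (length_seq (S n) 0)|apply (seq_NoDup (S n) 0)].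
Qed.

Lemma vsafe_id p : vsafe (inst [] []) p.
Proof. apply vsafe_bc. intros; reflexivity. Qed.
Lemma vsubst_id0 p : vsubst (inst [] []) p = p.
Proof. apply vsubst_id. intros; reflexivity. Qed.

Lemma L_S2 a b ax : L ax -> (ax = ax_mono \/ ax = ax_top \/ ax = ax_cufi) -> L (psubst (S2 a b) ax).
Proof.
  intros Hax Hs. apply HL; auto. apply S2_wf.
  destruct Hs as [ -> | [ -> | -> ] ]; simpl; repeat split; try apply vsafe_id; intros v _ Hn; auto.
Qed.

Lemma box_mono_ax a b : L ax_mono -> L (Imp (FBox (FAnd a b)) (FAnd (FBox a) (FBox b))).
Proof.
  intros H. pose proof (L_S2 a b _ H (or_introl eq_refl)) as H2.
  simpl in H2. rewrite !vsubst_id0 in H2. exact H2.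
Qed.

Lemma box_cufi_ax a b : L ax_cufi -> L (Imp (FAnd (FBox a) (FBox b)) (FBox (FAnd a b))).
Proof.
  intros H. pose proof (L_S2 a b _ H (or_intror (or_intror eq_refl))) as H2.
  simpl in H2. rewrite !vsubst_id0 in H2. exact H2.
Qed.

Lemma box_mono a b : L ax_mono -> L (Imp a b) -> L (Imp (FBox a) (FBox b)).
Proof.
  intros Hm Hab.
  assert (E : L (Equiv a (FAnd a b))).
  { eapply Ltmp1; [|apply Hab]. taut. }
  apply HL in E.
  eapply Ltmp2; [|apply E|apply (box_mono_ax a b Hm)]. taut.
Qed.

Lemma witness G x y psi :
  ~ In y (vars G) -> ~ In y (vars psi) -> x <> y ->
  L (Imp G (vsubst (upd (fun v => v) x y) psi)) -> L (Imp G (FAll x psi)).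
Proof.
  intros HG Hp Hxy H.
  set (chi := vsubst (upd (fun v => v) x y) psi) in *.
  assert (H1 : L (Imp G (FAll y chi))).
  { eapply Lmp; [apply Lgen, H|]. apply Lcpl, cpl_gen_ax.
    intros Hf. apply HG, free_vars, Hf. }
  assert (H2 : L (Imp (FAll y chi) psi)).
  { pose proof (cpl_inst y x chi (rename_safe2 psi x y Hp)) as C.
    unfold chi in C at 2. rewrite rename_back in C by auto. apply Lcpl, C. }
  assert (H3 : L (Imp (FAll y chi) (FAll x psi))).
  { eapply Lmp; [apply Lgen, H2|]. apply Lcpl, cpl_gen_ax.
    simpl. intros [_ Hf]. eapply rename_notfree; [apply Hxy|apply Hf]. }
  eapply Ltmp2; [|apply H1|apply H3]. taut.
Qed.

End Der.

Fixpoint codel (l : list nat) : nat :=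
  match l with [] => 0 | a :: l => S (to_nat (a, codel l)) end.

Fixpoint code (p : form) : nat :=
  match p with
  | FTop => to_nat (0, 0)
  | FBot => to_nat (1, 0)
  | FAtom k args => to_nat (2, to_nat (k, codel args))
  | FAnd p q => to_nat (3, to_nat (code p, code q))
  | FNeg p => to_nat (4, code p)
  | FAll x p => to_nat (5, to_nat (x, code p))
  | FBox p => to_nat (6, code p)
  end.

Lemma to_nat_inj a b : to_nat a = to_nat b -> a = b.
Proof. intros H. rewrite <- (cancel_of_to a), <- (cancel_of_to b), H. reflexivity. Qed.

Lemma codel_inj l : forall l', codel l = codel l' -> l = l'.
Proof.
  induction l as [|a l IH]; intros [|b l'] H; cbn [codel] in *; try discriminate; auto.
  apply eq_add_S in H. apply to_nat_inj in H. injection H as -> H. f_equal; auto.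
Qed.

Lemma code_inj p : forall q, code p = code q -> p = q.
Proof.
  induction p; intros q H; destruct q; cbn [code] in H; apply to_nat_inj, pair_equal_spec in H;
    destruct H as [H0 H]; try discriminate; try reflexivity;
    try (apply to_nat_inj, pair_equal_spec in H; destruct H as [H1 H2]);
    subst; f_equal; auto. apply codel_inj; auto.
Qed.

Definition dec (n : nat) : form :=
  match xm_inf (exists p, code p = n) with
  | left h => proj1_sig (constructive_indefinite_description _ h)
  | right _ => FTop
  end.

Lemma dec_code p : dec (code p) = p.
Proof.
  unfold dec. destruct xm_inf as [h|h].
  - destruct constructive_indefinite_description as [q Hq]. simpl. apply code_inj; auto.
  - exfalso; apply h; eauto.
Qed.


Lemma in_list_max x l : In x l -> x <= list_max l.
Proof. induction l; simpl; intros H; [tauto|]. destruct H; subst; try lia. specialize (IHl H); lia. Qed.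

Section Lind.
Variable L : form -> Prop.
Hypothesis HL : is_PML L.
Variable M : nat.

Definition Con (p : form) : Prop := ~ L (FNeg p).

Definition wit (G : form) : nat := S (list_max (vars G)) + M.

Lemma wit_fresh G : ~ In (wit G) (vars G).
Proof. intros H. apply in_list_max in H. unfold wit in H. lia. Qed.

Definition step (G th : form) : form :=
  if xm_inf (Con (FAnd G th)) then
    match th with
    | FNeg (FAll x psi) => FAnd (FAnd G th) (FNeg (vsubst (upd (fun v => v) x (wit (FAnd G th))) psi))
    | _ => FAnd G th
    end
  else G.

Lemma step_imp G th : L (Imp (step G th) G).
Proof.
  unfold step. destruct xm_inf.
  - destruct th; try (apply Ltaut; auto; taut). destruct th; apply Ltaut; auto; taut.
  - apply Ltaut; auto; taut.
Qed.

Lemma step_in G th : Con (FAnd G th) -> L (Imp (step G th) th).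
Proof.
  intros Hc. unfold step. destruct xm_inf; [|tauto].
  destruct th; try (apply Ltaut; auto; taut). destruct th; apply Ltaut; auto; taut.
Qed.

Lemma step_con G th : Con G -> Con (step G th).
Proof.
  intros Hc. unfold step. destruct xm_inf as [h|h]; auto.
  destruct th; auto. destruct th; auto.
  set (G' := FAnd G (FNeg (FAll x th))) in *.
  intros H. apply h.
  assert (W : L (Imp G' (FAll x th))).
  { apply (witness L HL G' x (wit G') th).
    - apply wit_fresh.
    - intros Hi. apply (wit_fresh G'). unfold G'. simpl. apply in_or_app. right. simpl. auto.
    - intros E. apply (wit_fresh G'). rewrite <- E. unfold G'. simpl. apply in_or_app. right. simpl. auto.
    - exact H. }
  unfold G' in *. refine (Ltmp1 L HL _ _ _ W); taut.
Qed.

Variable phi0 : form.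
Fixpoint g (n : nat) : form :=
  match n with 0 => phi0 | S n => step (g n) (dec n) end.

Lemma g_chain n m : n <= m -> L (Imp (g m) (g n)).
Proof.
  induction 1.
  - apply Ltaut; auto; taut.
  - change (g (S m)) with (step (g m) (dec m)). refine (Ltmp2 L HL _ _ _ _ (step_imp (g m) (dec m)) (IHle)); taut.
Qed.

Hypothesis Hcon : Con phi0.
Lemma g_con n : Con (g n).
Proof. induction n; simpl; auto. apply step_con; auto. Qed.

Definition Gam (p : form) : Prop := exists n, L (Imp (g n) p).

Lemma Gam_incons p : Gam p -> Gam (FNeg p) -> False.
Proof.
  intros [n Hn] [m Hm]. apply (g_con (max n m)).
  pose proof (g_chain n (max n m) ltac:(lia)). pose proof (g_chain m (max n m) ltac:(lia)).
  assert (A1 : L (Imp (g (max n m)) p)) by (refine (Ltmp2 L HL _ _ _ _ (H) (Hn)); taut).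
  assert (A2 : L (Imp (g (max n m)) (FNeg p))) by (refine (Ltmp2 L HL _ _ _ _ (H0) (Hm)); taut).
  refine (Ltmp2 L HL _ _ _ _ (A1) (A2)); taut.
Qed.

Lemma Gam_max p : Gam p \/ Gam (FNeg p).
Proof.
  destruct (classic (Con (FAnd (g (code p)) p))) as [h|h].
  - left. exists (S (code p)). simpl. rewrite dec_code. apply step_in; auto.
  - right. exists (code p). apply NNPP in h. refine (Ltmp1 L HL _ _ _ (h)); taut.
Qed.

Lemma Gam_thm p : L p -> Gam p.
Proof. intros H. exists 0. refine (Ltmp1 L HL _ _ _ (H)); taut. Qed.

Lemma Gam_mp a b : Gam a -> Gam (Imp a b) -> Gam b.
Proof.
  intros [n Hn] [m Hm]. exists (max n m).
  pose proof (g_chain n (max n m) ltac:(lia)). pose proof (g_chain m (max n m) ltac:(lia)).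
  assert (A1 : L (Imp (g (max n m)) a)) by (refine (Ltmp2 L HL _ _ _ _ (H) (Hn)); taut).
  assert (A2 : L (Imp (g (max n m)) (Imp a b))) by (refine (Ltmp2 L HL _ _ _ _ (H0) (Hm)); taut).
  refine (Ltmp2 L HL _ _ _ _ (A1) (A2)); taut.
Qed.

Lemma Gam_hen x psi : Gam (FNeg (FAll x psi)) ->
  exists d, Gam (FNeg (vsubst (upd (fun v => v) x (d + M)) psi)).
Proof.
  intros Hg. set (th := FNeg (FAll x psi)) in *.
  assert (Hc : Con (FAnd (g (code th)) th)).
  { intros H. apply (Gam_incons th); auto. exists (code th). refine (Ltmp1 L HL _ _ _ (H)); taut. }
  exists (S (list_max (vars (FAnd (g (code th)) th)))). exists (S (code th)).
  change (g (S (code th))) with (step (g (code th)) (dec (code th))). rewrite dec_code. unfold step. destruct xm_inf; [|tauto].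
  unfold th, wit. apply Ltaut; auto. taut.
Qed.

Lemma Gam_phi0 : Gam phi0.
Proof. exists 0. change (g 0) with phi0. apply Ltaut; auto. taut. Qed.

End Lind.


Section Model.
Variable L : form -> Prop.
Hypothesis HL : is_PML L.
Variable M : nat.
Hypothesis Hmono : L ax_mono.

Record MCS (G : form -> Prop) : Prop := {
  mcs_thm : forall a, L a -> G a;
  mcs_mp : forall a b, G a -> G (Imp a b) -> G b;
  mcs_max : forall a, G a \/ G (FNeg a);
  mcs_con : forall a, G a -> G (FNeg a) -> False;
  mcs_hen : forall x psi, G (FNeg (FAll x psi)) ->
     exists d, G (FNeg (vsubst (upd (fun v => v) x (d + M)) psi)) }.

Lemma lind phi : Con L phi -> exists G, MCS G /\ G phi.
Proof.
  intros Hc. exists (Gam L M phi). split; [constructor|].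
  - apply Gam_thm; auto.
  - apply Gam_mp; auto.
  - apply Gam_max; auto.
  - apply Gam_incons; auto.
  - apply Gam_hen; auto.
  - apply Gam_phi0; auto.
Qed.

Section G.
Variable G : form -> Prop.
Hypothesis HG : MCS G.

Lemma mcs_l a b : L (Imp a b) -> G a -> G b.
Proof. intros H Ha. eapply mcs_mp; eauto. apply mcs_thm; auto. Qed.

Lemma mcs_neg a : G (FNeg a) <-> ~ G a.
Proof.
  split.
  - intros H Ha. eapply mcs_con; eauto.
  - intros H. destruct (mcs_max _ HG a); tauto.
Qed.

Lemma mcs_and a b : G (FAnd a b) <-> G a /\ G b.
Proof.
  split.
  - intros H. split; eapply mcs_l; eauto; apply Ltaut; auto; taut.
  - intros [Ha Hb]. apply (mcs_mp _ HG b); auto. apply (mcs_mp _ HG a); auto.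
    apply mcs_thm; auto. apply Ltaut; auto; taut.
Qed.

Lemma mcs_top : G FTop.
Proof. apply mcs_thm; auto. apply Ltaut; auto. taut. Qed.

Lemma mcs_bot : ~ G FBot.
Proof. intros H. apply (mcs_con _ HG FTop). apply mcs_top. eapply mcs_l; eauto. apply Ltaut; auto; taut. Qed.

Lemma mcs_all x psi : (forall d, ~ bnd (d + M) psi) ->
  G (FAll x psi) <-> forall d, G (vsubst (upd (fun v => v) x (d + M)) psi).
Proof.
  intros Hb. split.
  - intros H d. eapply mcs_l; eauto. apply Lcpl; auto. apply cpl_inst.
    apply vsafe_bc. intros v Hv Hbv. unfold upd in *. destruct (Nat.eqb_spec v x); auto.
    exfalso; eapply Hb; eauto.
  - intros H. apply NNPP. intros Hn. apply mcs_neg in Hn.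
    destruct (mcs_hen _ HG _ _ Hn) as [d Hd]. apply mcs_neg in Hd; auto.
Qed.

End G.

Lemma mcs_box_lemma chi psi : (forall D, MCS D -> D chi -> D psi) -> L (Imp chi psi).
Proof.
  intros H. apply NNPP. intros Hn.
  destruct (lind (FAnd chi (FNeg psi)) Hn) as [D [HD HDc]].
  apply (mcs_and D HD) in HDc. destruct HDc as [H1 H2].
  apply (mcs_neg D HD) in H2. apply H2, H; auto.
Qed.

Definition Wd := {G | MCS G}.
Definition Vm (w : Wd) (X : Wd -> Prop) : Prop :=
  exists chi, proj1_sig w (FBox chi) /\ forall D : Wd, proj1_sig D chi -> X D.
Definition Im (w : Wd) (n k : nat) (ds : list nat) : Prop :=
  proj1_sig w (FAtom k (map (fun d => d + M) ds)).

Lemma truth p : (forall z, bnd z p -> z < M) ->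
  forall (A : nat -> nat) (w : Wd),
    sat Vm Im A p w <-> proj1_sig w (vsubst (fun v => A v + M) p).
Proof.
  induction p; intros Hb A [G HG]; simpl in *.
  - split; auto; intros _; apply mcs_top; auto.
  - split; [tauto|]. apply mcs_bot; auto.
  - unfold Im. simpl. rewrite map_map. tauto.
  - rewrite mcs_and by auto. rewrite (IHp1 (fun z h => Hb z (or_introl h)) A (exist _ G HG)), (IHp2 (fun z h => Hb z (or_intror h)) A (exist _ G HG)). simpl. tauto.
  - rewrite mcs_neg by auto. rewrite (IHp ltac:(auto) A (exist _ G HG)). simpl. tauto.
  - assert (Hb' : forall z, bnd z p -> z < M) by (intros z h; apply Hb; auto).
    assert (Hx : x < M) by (apply Hb; auto).
    rewrite mcs_all by (auto; intros d Hd; apply bnd_vsubst in Hd; apply Hb' in Hd; lia).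
    assert (Hs : vsafe (upd (fun v => A v + M) x x) p).
    { apply vsafe_bc. intros v Hv Hbv. unfold upd in *. destruct (Nat.eqb_spec v x); auto.
      apply Hb' in Hbv. lia. }
    split; intros H d.
    + rewrite vsubst_comp by auto.
      specialize (H d). apply (IHp Hb' (upd A x d) (exist _ G HG)) in H. simpl in H.
      erewrite vsubst_ext; [apply H|]. intros v Hv. unfold upd.
      destruct (Nat.eqb_spec v x). { rewrite Nat.eqb_refl. auto. }
      destruct (Nat.eqb_spec (A v + M) x); auto. lia.
    + apply (IHp Hb' (upd A x d) (exist _ G HG)). simpl.
      specialize (H d). rewrite vsubst_comp in H by auto.
      erewrite vsubst_ext; [apply H|]. intros v Hv. unfold upd.
      destruct (Nat.eqb_spec v x). { rewrite Nat.eqb_refl. auto. }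
      destruct (Nat.eqb_spec (A v + M) x); auto. lia.
  - unfold Vm. simpl. split.
    + intros [chi [Hc Hx]]. eapply mcs_l; [auto|apply box_mono; auto|apply Hc].
      apply mcs_box_lemma. intros D HD HDc.
      apply (IHp Hb A (exist _ D HD)). apply (Hx (exist _ D HD)). auto.
    + intros H. exists (vsubst (fun v => A v + M) p). split; auto.
      intros D HD. apply (IHp Hb A D). auto.
Qed.

Variables t c : bool.
Hypothesis Htop : t = true -> L ax_top.
Hypothesis Hcufi : c = true -> L ax_cufi.

Lemma Vm_mono : monotonicN Vm.
Proof. intros w X Y [chi [H1 H2]] HXY. exists chi. split; auto. Qed.

Lemma Vm_top : t = true -> toppedN Vm.
Proof.
  intros Ht w. exists FTop. split; auto. destruct w as [G HG]. simpl.
  apply mcs_thm; auto.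
Qed.

Lemma Vm_cufi : c = true -> cufiN Vm.
Proof.
  intros Hc w l Hl HX. destruct w as [G HG].
  assert (K : forall l, l <> [] -> (forall X, In X l -> Vm (exist _ G HG) X) ->
     exists chi, G (FBox chi) /\ forall D : Wd, proj1_sig D chi -> forall X, In X l -> X D).
  { clear l Hl HX. induction l as [|X l IH]; intros Hl HX; [congruence|].
    destruct (HX X (or_introl eq_refl)) as [chi1 [H1 H2]]. simpl in H1.
    destruct l as [|Y l].
    - exists chi1. split; auto. intros D HD Z [<-|[]]. auto.
    - destruct IH as [chi2 [K1 K2]]; [discriminate|intros; apply HX; simpl; auto|].
      exists (FAnd chi1 chi2). split.
      + eapply mcs_l; [auto|apply box_cufi_ax; auto|]. apply mcs_and; auto.
      + intros [D HD] HDc Z [<-|HZ].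
        * apply H2. simpl in *. apply mcs_and in HDc; tauto.
        * apply K2; auto. simpl in *. apply mcs_and in HDc; tauto. }
  destruct (K l Hl HX) as [chi [H1 H2]]. exists chi. split; auto.
Qed.

End Model.


Lemma LL_PML Ax : is_PML (LeastLogic Ax).
Proof.
  split; [|split; [|split; [|split]]].
  - intros p Hp L HL _. apply HL, Hp.
  - intros S p HS Hs Hp L HL HA. apply HL; auto. apply Hp; auto.
  - intros p q Hp Hq L HL HA. eapply HL; [apply Hp|apply Hq]; auto.
  - intros x p Hp L HL HA. apply HL. apply Hp; auto.
  - intros p q Hp L HL HA. apply HL. apply Hp; auto.
Qed.

Lemma LL_ax Ax a : Ax a -> LeastLogic Ax a.
Proof. intros H L HL HA. auto. Qed.

Definition clos (l : list nat) (p : form) : form := fold_right FAll p l.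

Lemma clos_free l p v : free v (clos l p) -> free v p /\ ~ In v l.
Proof. induction l; simpl; intros H; [auto|]. destruct H as [H1 H2]. apply IHl in H2. intuition. Qed.

Lemma clos_bnd l p z : bnd z (clos l p) -> In z l \/ bnd z p.
Proof. induction l; simpl; intros H; [auto|]. destruct H as [->|H]; auto. apply IHl in H. tauto. Qed.

Lemma clos_L L (HL : is_PML L) l p : L (clos l p) -> L p.
Proof.
  induction l; simpl; intros H; auto. apply IHl.
  eapply Lmp; [auto|apply H|]. apply Lcpl; auto.
  pose proof (cpl_inst a a (clos l p)) as C.
  rewrite vsubst_id in C by (intros v _; unfold upd; destruct (Nat.eqb_spec v a); auto).
  apply C. apply vsafe_bc. intros v _ _. unfold upd. destruct (Nat.eqb_spec v a); auto.
Qed.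

Lemma clos_sat {W D : Type} (V : W -> (W -> Prop) -> Prop) I w l p :
  (forall A : nat -> D, sat V I A p w) -> forall A, sat V I A (clos l p) w.
Proof. induction l; simpl; intros H A; auto. Qed.

Lemma completeness t c p : Valid t c p -> LeastLogic (ax_set t c) p.
Proof.
  intros Hv. apply NNPP. intros Hn.
  set (L := LeastLogic (ax_set t c)) in *.
  assert (HL : is_PML L) by apply LL_PML.
  set (psi := clos (vars p) p).
  set (M := S (list_max (vars psi))).
  assert (Hc : Con L (FNeg psi)).
  { intros H. apply Hn. apply (clos_L L HL (vars p)). fold psi.
    refine (Ltmp1 L HL _ _ _ H). taut. }
  assert (Hm : L ax_mono) by (apply LL_ax; left; auto).
  destruct (lind L HL M _ Hc) as [G [HG HGp]].
  pose (w := exist _ G HG : Wd L M).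
  assert (Hs : sat (Vm L M) (Im L M) (fun _ => 0) psi w).
  { apply clos_sat. intros A.
    apply (Hv (Wd L M) (inhabits w) (Vm L M)).
    - apply Vm_mono.
    - intros Ht. apply (Vm_top L M t); auto. intros E; subst t. apply LL_ax. right; left; auto.
    - intros Hc'. apply (Vm_cufi L HL M c); auto. intros E; subst c. apply LL_ax. right; right; auto.
    - constructor. exact 0. }
  apply (truth L HL M Hm) in Hs.
  - simpl in Hs. rewrite vsubst_id in Hs.
    + eapply (mcs_con L M G HG); eauto.
    + intros v Hv'. exfalso. apply clos_free in Hv'. destruct Hv' as [H1 H2]. apply H2, free_vars, H1.
  - intros z Hz. apply bnd_vars in Hz. apply in_list_max in Hz. unfold M. lia.
Qed.

Theorem mainTheorem5 :
  (forall (t c : bool) (p : form),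
      LeastLogic (ax_set t c) p <->
      (forall (W : Type), inhabited W ->
       forall V : W -> (W -> Prop) -> Prop,
         monotonicN V -> (t = true -> toppedN V) -> (c = true -> cufiN V) ->
         fvalid V p)) /\
  (forall p : form,
      QK p <->
      (forall (W : Type), inhabited W ->
       forall V : W -> (W -> Prop) -> Prop,
         monotonicN V -> toppedN V -> cufiN V -> fvalid V p)).
Proof.
  assert (A : forall t c p, LeastLogic (ax_set t c) p <-> Valid t c p).
  { intros t c p. split; [apply LL_sound|apply completeness]. }
  split.
  - apply A.
  - intros p.
    assert (E : QK p <-> LeastLogic (ax_set true true) p).
    { unfold QK, LeastLogic, ax_set. split; intros H L HL HA; apply H; auto;
        intros a Ha; apply HA; intuition. }
    rewrite E, A. unfold Valid. split; intros H W HW V H1 H2 H3; apply H; auto.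
Qed.
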